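(* Under the assumptions of the explicit-formulae proposition (piecewise linear concave non-positive increasing $v$ on grid $x_1<\dots<x_N$, $-\infty$ below $x_1$ and constant above $x_N$; $u$ concave increasing with $u^\dagger$ continuous on $(0,\infty)$ and $\lim_{p\to0}u^\dagger(p)=\infty$; $s\in(0,1)$), $\lim_{\eta\to\infty}\gamma^\eta=\gamma_{\min}$.
   Context: $\gamma_{\min}=\inf\{x:u(x)>-\infty\}$. $\Phi$ is the standard normal distribution function, $M=|\mu-r|\sqrt{\delta t}/\sigma$, $Q(x)=\Phi(M+\Phi^{-1}(x))$, $q^A_{BS}=Q'$. For concave increasing $g$, $g^\dagger(p)=\inf\{x:p\in\partial g(x)\}$, $\partial g$ the superdifferential. $C\in\{0,1\}$. For $\eta>0$: $f^\eta(x)=v^\dagger(\eta s^{C-1}e^{-r\delta t}q^A_{BS}(x))$, $\gamma^\eta=u^\dagger\big(-\frac{\eta}{\delta t}\big(-1+s\int_0^1(1+v(f^\eta(x)))\mathrm dx\big)^{-1}\big)$. *)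

(* Defs.v *)
From Stdlib Require Import Reals Lra ClassicalEpsilon.
Open Scope R_scope.

(* Extended reals "R u {-oo}": None stands for -infinity. *)
Definition ER := option R.

Definition ER_le (a b : ER) : Prop :=
  match a, b with
  | None, _ => True
  | Some _, None => False
  | Some x, Some y => x <= y
  end.

(* value of a finite extended real (junk 0 at -oo) *)
Definition valR (a : ER) : R := match a with Some x => x | None => 0 end.

Definition concave_ext (g : R -> ER) : Prop :=
  forall x y a b t, g x = Some a -> g y = Some b -> 0 <= t <= 1 ->
    exists c, g (t * x + (1 - t) * y) = Some c /\ t * a + (1 - t) * b <= c.

Definition nondecreasing_ext (g : R -> ER) : Prop :=
  forall x y, x <= y -> ER_le (g x) (g y).

Definition superdiff (g : R -> ER) (x p : R) : Prop :=
  exists gx, g x = Some gx /\ forall y, ER_le (g y) (Some (gx + p * (y - x))).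

Definition is_lower_bound (S : R -> Prop) (m : R) : Prop := forall x, S x -> m <= x.
Definition is_glb (S : R -> Prop) (m : R) : Prop :=
  is_lower_bound S m /\ forall b, is_lower_bound S b -> b <= m.

(* g^dagger(p) = inf { x : p in superdiff g x } (junk value if no real infimum) *)
Definition dagger_set (g : R -> ER) (p : R) : R -> Prop := fun x => superdiff g x p.
Definition dagger (g : R -> ER) (p : R) : R :=
  epsilon (inhabits 0) (is_glb (dagger_set g p)).

(* effective domain {x : g x > -oo} ; gamma_min is its infimum *)
Definition dom_ext (g : R -> ER) : R -> Prop := fun x => g x <> None.

(* Riemann integral of f between a and b (junk if not integrable) *)
Definition Rint (f : R -> R) (a b : R) : R :=
  epsilon (inhabits 0) (fun I => exists pr : Riemann_integrable f a b, RiemannInt pr = I).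

Definition phi_std (t : R) : R := exp (- (t ^ 2) / 2) / sqrt (2 * PI).
Definition Phi (x : R) : R :=
  epsilon (inhabits 0) (fun l => Un_cv (fun n => Rint phi_std (- INR n) x) l).
Definition Phi_inv (y : R) : R := epsilon (inhabits 0) (fun x => Phi x = y).

Definition Mpar (mu r sigma dt : R) : R := Rabs (mu - r) * sqrt dt / sigma.
Definition Qfun (M x : R) : R := Phi (M + Phi_inv x).
Definition qBS (M x : R) : R :=
  epsilon (inhabits 0) (fun l => derivable_pt_lim (Qfun M) x l).

Definition f_eta (v : R -> ER) (mu r sigma dt s : R) (C : nat) (eta x : R) : R :=
  dagger v (eta * powerRZ s (Z.of_nat C - 1) * exp (- r * dt) * qBS (Mpar mu r sigma dt) x).

Definition gamma_eta (u v : R -> ER) (mu r sigma dt s : R) (C : nat) (eta : R) : R :=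
  dagger u (- (eta / dt) *
    / (-1 + s * Rint (fun x => 1 + valR (v (f_eta v mu r sigma dt s C eta x))) 0 1)).

(* Main.v *)
Require Import Defs.
From Stdlib Require Import FunctionalExtensionality.
From Stdlib Require Import Reals Lra ClassicalEpsilon.
From Stdlib Require Import Ranalysis5.
From Stdlib Require Import RiemannInt_SF RiemannInt RList Classical Lia.
From Coquelicot Require Import Coquelicot.
Open Scope R_scope.

Definition g0 (t : R) : R := exp (- (t * t)).
Definition F (x : R) : R := RInt g0 0 x.
Definition U (x t : R) : R := exp (- (x * x) * (1 + t * t)) / (1 + t * t).
Definition dU (x t : R) : R := -2 * x * exp (- (x * x) * (1 + t * t)).
Definition G (x : R) : R := RInt (U x) 0 1.

Lemma pos1tt t : 0 < 1 + t * t.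
Proof. nra. Qed.

Lemma g0_cont x : continuous g0 x.
Proof. apply (ex_derive_continuous (K:=R_AbsRing) (V:=R_NormedModule)). unfold g0. auto_derive. auto. Qed.

Lemma ex_RInt_g0 a b : ex_RInt g0 a b.
Proof. apply (ex_RInt_continuous (V:=R_CompleteNormedModule)). intros; apply g0_cont. Qed.

Lemma F_deriv x : is_derive F x (g0 x).
Proof.
  apply (is_derive_RInt g0 F 0 x).
  - apply filter_forall. intros b. apply (RInt_correct (V:=R_CompleteNormedModule)). apply ex_RInt_g0.
  - apply g0_cont.
Qed.

Lemma U_deriv x t : is_derive (fun u => U u t) x (dU x t).
Proof.
  unfold U, dU. auto_derive.
  - pose proof (pos1tt t); lra.
  - field. pose proof (pos1tt t); lra.
Qed.

Lemma U_cont x t : continuous (U x) t.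
Proof. apply (ex_derive_continuous (K:=R_AbsRing) (V:=R_NormedModule)). unfold U. auto_derive. pose proof (pos1tt t); lra. Qed.

Lemma dU_cont2 x t : continuity_2d_pt dU x t.
Proof.
  unfold dU.
  apply continuity_2d_pt_mult.
  apply continuity_2d_pt_mult.
  apply continuity_2d_pt_const.
  apply continuity_2d_pt_id1.
  apply continuity_1d_2d_pt_comp.
  apply derivable_continuous_pt. apply derivable_pt_exp.
  apply continuity_2d_pt_mult.
  apply continuity_2d_pt_opp.
  apply continuity_2d_pt_mult; apply continuity_2d_pt_id1.
  apply continuity_2d_pt_plus. apply continuity_2d_pt_const.
  apply continuity_2d_pt_mult; apply continuity_2d_pt_id2.
Qed.

Lemma G_deriv0 x : is_derive G x (RInt (fun t => dU x t) 0 1).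
Proof.
  assert (H := is_derive_RInt_param U 0 1 x).
  assert (E : RInt (fun t => Derive (fun u => U u t) x) 0 1 = RInt (fun t => dU x t) 0 1).
  { apply RInt_ext. intros. apply is_derive_unique. apply U_deriv. }
  rewrite <- E. apply H.
  - apply filter_forall. intros. eexists. apply U_deriv.
  - intros. apply continuity_2d_pt_ext with dU.
    intros. symmetry. apply is_derive_unique. apply U_deriv.
    apply dU_cont2.
  - apply filter_forall. intros. apply (ex_RInt_continuous (V:=R_CompleteNormedModule)). intros. apply U_cont.
Qed.

Lemma RInt_scalR (f : R -> R) a b l : ex_RInt f a b -> @eq R (RInt (fun x => l * f x) a b) (l * RInt f a b).
Proof. intros H. exact (RInt_scal (V:=R_CompleteNormedModule) f a b l H). Qed.

Lemma RInt_constR a b (c : R) : @eq R (RInt (fun _ => c) a b) ((b - a) * c).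
Proof. exact (RInt_const (V:=R_CompleteNormedModule) a b c). Qed.

Lemma RInt_ChaslesR (f : R -> R) a b c : ex_RInt f a b -> ex_RInt f b c -> @eq R (RInt f a b + RInt f b c) (RInt f a c).
Proof. intros H1 H2. exact (RInt_Chasles (V:=R_CompleteNormedModule) f a b c H1 H2). Qed.

Lemma RInt_comp_linR (f : R -> R) u v a b : ex_RInt f (u * a + v) (u * b + v) ->
  @eq R (RInt (fun y => u * f (u * y + v)) a b) (RInt f (u * a + v) (u * b + v)).
Proof. intros H. exact (RInt_comp_lin (V:=R_CompleteNormedModule) f u v a b H). Qed.

Lemma RInt_extR (f g : R -> R) a b : (forall x, Rmin a b < x < Rmax a b -> f x = g x) -> @eq R (RInt f a b) (RInt g a b).
Proof. intros H. exact (RInt_ext (V:=R_CompleteNormedModule) f g a b H). Qed.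

Lemma is_RInt_uniqueR (f : R -> R) a b (l : R) : is_RInt f a b l -> @eq R (RInt f a b) l.
Proof. intros H. exact (is_RInt_unique (V:=R_CompleteNormedModule) f a b l H). Qed.

Lemma ex_RInt_contR (f : R -> R) a b : (forall z, Rmin a b <= z <= Rmax a b -> continuous f z) -> ex_RInt f a b.
Proof. intros H. exact (ex_RInt_continuous (V:=R_CompleteNormedModule) f a b H). Qed.

Lemma RInt_dU x : RInt (fun t => dU x t) 0 1 = -2 * g0 x * F x.
Proof.
  transitivity (RInt (fun t => (-2 * g0 x) * (x * g0 (x * t + 0))) 0 1).
  { apply RInt_extR. intros t _. unfold dU, g0.
    replace (- (x * x) * (1 + t * t)) with (- (x * x) + - ((x * t + 0) * (x * t + 0))) by ring.
    rewrite exp_plus. ring. }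
  rewrite RInt_scalR.
  2:{ apply ex_RInt_contR. intros. apply (ex_derive_continuous (K:=R_AbsRing) (V:=R_NormedModule)).
      unfold g0. auto_derive. auto. }
  rewrite RInt_comp_linR. 2:{ apply ex_RInt_g0. }
  unfold F. f_equal. f_equal; ring.
Qed.

Lemma G_deriv x : is_derive G x (-2 * g0 x * F x).
Proof. rewrite <- RInt_dU. apply G_deriv0. Qed.

Definition Hf (x : R) : R := F x * F x + G x.

Lemma Hf_deriv x : is_derive Hf x 0.
Proof.
  unfold Hf.
  replace 0 with (g0 x * F x + F x * g0 x + (-2 * g0 x * F x)) by ring.
  apply (is_derive_plus (K:=R_AbsRing) (V:=R_NormedModule)).
  apply (is_derive_mult (K:=R_AbsRing)); try apply F_deriv.
  intros; apply Rmult_comm.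
  apply G_deriv.
Qed.

Lemma Hf_const x : Hf x = Hf 0.
Proof.
  destruct (Req_dec x 0) as [->|Hx]; auto.
  assert (D : forall c, derivable_pt_lim Hf c 0).
  { intros c. apply is_derive_Reals. apply Hf_deriv. }
  destruct (Rlt_or_le 0 x) as [Hp|Hn].
  - destruct (MVT_cor2 Hf (fun _ => 0) 0 x Hp (fun c _ => D c)) as [c [Hc _]]. lra.
  - assert (x < 0) by lra.
    destruct (MVT_cor2 Hf (fun _ => 0) x 0 H (fun c _ => D c)) as [c [Hc _]]. lra.
Qed.

Lemma F0 : F 0 = 0.
Proof. unfold F. apply (RInt_point (V:=R_CompleteNormedModule)). Qed.

Lemma G0 : G 0 = PI / 4.
Proof.
  unfold G.
  transitivity (RInt (fun t => / (1 + t²)) 0 1).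
  { apply RInt_extR. intros t _. unfold U, Rsqr. replace (- (0 * 0) * (1 + t * t)) with 0 by ring.
    rewrite exp_0. field. pose proof (pos1tt t); lra. }
  rewrite <- atan_1. replace (atan 1) with (atan 1 - atan 0) by (rewrite atan_0; ring).
  apply is_RInt_uniqueR.
  apply (is_RInt_derive (V:=R_CompleteNormedModule) atan (fun t => / (1 + t²))).
  - intros. apply is_derive_atan.
  - intros. apply (ex_derive_continuous (K:=R_AbsRing) (V:=R_NormedModule)).
    auto_derive. unfold Rsqr. pose proof (pos1tt x); lra.
Qed.

Lemma Hf_val x : F x * F x + G x = PI / 4.
Proof. change (Hf x = PI/4). rewrite Hf_const. unfold Hf. rewrite F0, G0. ring. Qed.

Lemma RInt_leR (f g : R -> R) a b : a <= b -> ex_RInt f a b -> ex_RInt g a b ->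
  (forall x, a < x < b -> f x <= g x) -> RInt f a b <= RInt g a b.
Proof. apply RInt_le. Qed.

Lemma ex_RInt_U x : ex_RInt (U x) 0 1.
Proof. apply ex_RInt_contR. intros; apply U_cont. Qed.

Lemma G_ge0 x : 0 <= G x.
Proof.
  unfold G. apply RInt_ge_0. lra. apply ex_RInt_U.
  intros t _. unfold U. pose proof (pos1tt t). apply Rlt_le, Rdiv_lt_0_compat; auto. apply exp_pos.
Qed.

Lemma G_le x : G x <= g0 x.
Proof.
  unfold G. replace (g0 x) with (RInt (fun _ => g0 x) 0 1 : R) by (rewrite RInt_constR; ring).
  apply RInt_leR. lra. apply ex_RInt_U. apply ex_RInt_contR. intros. apply continuous_const.
  intros t Ht. unfold U, g0. pose proof (pos1tt t).
  assert (exp (- (x * x) * (1 + t * t)) <= exp (- (x * x))).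
  { destruct (Req_dec (x*x*(t*t)) 0) as [E|E].
    - right. f_equal. nra.
    - left. apply exp_increasing. assert (0 <= x*x*(t*t)) by (apply Rmult_le_pos; nra). nra. }
  apply Rmult_le_reg_r with (1 + t*t); auto.
  unfold Rdiv. rewrite Rmult_assoc, Rinv_l by lra.
  assert (0 < exp (- (x * x))) by apply exp_pos. nra.
Qed.

Lemma F_ge0 x : 0 <= x -> 0 <= F x.
Proof. intros Hx. unfold F. apply RInt_ge_0; auto. apply ex_RInt_g0. intros; unfold g0; left; apply exp_pos. Qed.

Lemma g0_small x : 0 < x -> g0 x <= / x.
Proof.
  intros Hx. unfold g0. rewrite exp_Ropp.
  apply Rinv_le_contravar; auto.
  pose proof (exp_ineq1_le (x*x)). nra.
Qed.

Lemma F_lim eps : 0 < eps -> exists X, forall x, X <= x -> Rabs (F x - sqrt PI / 2) < eps.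
Proof.
  intros He.
  set (s := sqrt PI / 2).
  assert (Hs : 0 < s) by (unfold s; assert (0 < sqrt PI) by (apply sqrt_lt_R0; apply PI_RGT_0); lra).
  assert (Hs2 : s * s = PI / 4).
  { unfold s. replace (sqrt PI / 2 * (sqrt PI / 2)) with (sqrt PI * sqrt PI / 4) by field.
    rewrite sqrt_sqrt; [lra| left; apply PI_RGT_0]. }
  exists (2 / (eps * s) + 1). intros x Hx.
  assert (0 < 2 / (eps * s)) by (apply Rdiv_lt_0_compat; [lra| apply Rmult_lt_0_compat; lra]).
  assert (Hx0 : 0 < x) by lra.
  pose proof (Hf_val x). pose proof (G_ge0 x). pose proof (G_le x). pose proof (g0_small x Hx0).
  pose proof (F_ge0 x (Rlt_le _ _ Hx0)).
  assert (E : (F x - s) * (F x + s) = - G x) by nra.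
  assert (Hb : G x < eps * s).
  { apply Rle_lt_trans with (/ x). lra.
    apply Rmult_lt_reg_l with x; auto. rewrite Rinv_r by lra.
    assert (x * (eps * s) > 2 / (eps * s) * (eps * s)) by (apply Rmult_gt_compat_r; [apply Rmult_lt_0_compat; lra | lra]).
    unfold Rdiv in H5. rewrite Rmult_assoc, Rinv_l in H5 by (apply Rgt_not_eq, Rmult_lt_0_compat; lra). lra. }
  rewrite Rabs_left1 by nra.
  nra.
Qed.

Lemma sqrt2_pos : 0 < sqrt 2.
Proof. apply sqrt_lt_R0; lra. Qed.
Lemma sqrtPI_pos : 0 < sqrt PI.
Proof. apply sqrt_lt_R0; apply PI_RGT_0. Qed.

Lemma phi_pos t : 0 < phi_std t.
Proof.
  unfold phi_std. apply Rdiv_lt_0_compat. apply exp_pos.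
  apply sqrt_lt_R0. pose proof PI_RGT_0; lra.
Qed.

Lemma phi_g0 t : phi_std t = / sqrt PI * (/ sqrt 2 * g0 (/ sqrt 2 * t + 0)).
Proof.
  unfold phi_std, g0. rewrite sqrt_mult by (try lra; left; apply PI_RGT_0).
  pose proof sqrt2_pos. pose proof sqrtPI_pos.
  assert (H2 : sqrt 2 * sqrt 2 = 2) by (apply sqrt_sqrt; lra).
  replace (- t ^ 2 / 2) with (- ((/ sqrt 2 * t + 0) * (/ sqrt 2 * t + 0))).
  2:{ assert (Hi : / sqrt 2 * / sqrt 2 = / 2) by (rewrite <- Rinv_mult, H2; auto).
        replace ((/ sqrt 2 * t + 0) * (/ sqrt 2 * t + 0)) with ((/sqrt 2 * / sqrt 2) * (t*t)) by ring.
        rewrite Hi. field. }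
  field. lra.
Qed.

Lemma phi_cont t : continuous phi_std t.
Proof.
  apply (ex_derive_continuous (K:=R_AbsRing) (V:=R_NormedModule)). unfold phi_std. auto_derive.
  pose proof (sqrt_lt_R0 (2 * PI)). pose proof PI_RGT_0. assert (0 < sqrt (2*PI)) by (apply H; lra). lra.
Qed.

Lemma phi_even t : phi_std (- t) = phi_std t.
Proof. unfold phi_std. replace ((- t) ^ 2) with (t ^ 2) by ring. reflexivity. Qed.

Lemma ex_RInt_phi a b : ex_RInt phi_std a b.
Proof. apply ex_RInt_contR. intros; apply phi_cont. Qed.

Definition P0 (x : R) : R := RInt phi_std 0 x.

Lemma P0_F x : P0 x = / sqrt PI * F (/ sqrt 2 * x).
Proof.
  unfold P0, F.
  rewrite (RInt_extR phi_std (fun t => / sqrt PI * (/ sqrt 2 * g0 (/ sqrt 2 * t + 0)))).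
  2:{ intros; apply phi_g0. }
  rewrite RInt_scalR.
  2:{ apply ex_RInt_contR. intros. apply (ex_derive_continuous (K:=R_AbsRing) (V:=R_NormedModule)).
      unfold g0. auto_derive. auto. }
  rewrite RInt_comp_linR by apply ex_RInt_g0.
  f_equal. f_equal; ring.
Qed.

Lemma P0_lim eps : 0 < eps -> exists X, forall x, X <= x -> Rabs (P0 x - / 2) < eps.
Proof.
  intros He. pose proof sqrt2_pos. pose proof sqrtPI_pos.
  destruct (F_lim (eps * sqrt PI)) as [X HX]. nra.
  exists (sqrt 2 * X). intros x Hx.
  rewrite P0_F.
  assert (X <= / sqrt 2 * x).
  { apply Rmult_le_reg_l with (sqrt 2); auto. rewrite <- Rmult_assoc, Rinv_r by lra. lra. }
  specialize (HX _ H1).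
  replace (/ sqrt PI * F (/ sqrt 2 * x) - / 2) with (/ sqrt PI * (F (/ sqrt 2 * x) - sqrt PI / 2)) by (field; lra).
  rewrite Rabs_mult, Rabs_right by (left; apply Rinv_0_lt_compat; auto).
  apply Rmult_lt_reg_l with (sqrt PI); auto. rewrite <- Rmult_assoc, Rinv_r by lra. lra.
Qed.

Lemma P0_odd x : P0 (- x) = - P0 x.
Proof.
  unfold P0.
  assert (E := RInt_comp_linR phi_std (-1) 0 0 x (ex_RInt_phi _ _)).
  replace (-1 * 0 + 0) with 0 in E by ring. replace (-1 * x + 0) with (-x) in E by ring.
  rewrite <- E.
  rewrite (RInt_extR _ (fun y => -1 * phi_std y)).
  2:{ intros. replace (-1 * x0 + 0) with (- x0) by ring. rewrite phi_even. auto. }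
  rewrite RInt_scalR by apply ex_RInt_phi. ring.
Qed.

Lemma Rint_eq (f : R -> R) a b : ex_RInt f a b -> Rint f a b = RInt f a b.
Proof.
  intros H. unfold Rint.
  assert (Ex : exists I, exists pr : Riemann_integrable f a b, RiemannInt pr = I).
  { exists (RiemannInt (ex_RInt_Reals_0 f a b H)). eauto. }
  destruct (epsilon_spec (inhabits 0) _ Ex) as [pr Hpr]. rewrite <- Hpr.
  symmetry. apply RInt_Reals.
Qed.

Lemma Phi_eq x : Phi x = P0 x + / 2.
Proof.
  assert (C : Un_cv (fun n => Rint phi_std (- INR n) x) (P0 x + / 2)).
  { intros eps He. destruct (P0_lim eps He) as [X HX].
    destruct (archimed (Rmax X 0)) as [Ha _].
    assert (Hz : (0 <= up (Rmax X 0))%Z).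
    { apply le_IZR. pose proof (Rmax_r X 0). lra. }
    destruct (IZN _ Hz) as [n0 Hn0].
    exists n0. intros n Hn. unfold Rdist.
    rewrite Rint_eq by apply ex_RInt_phi.
    rewrite <- (RInt_ChaslesR phi_std (- INR n) 0 x) by apply ex_RInt_phi.
    assert (E : RInt phi_std (- INR n) 0 = P0 (INR n)).
    { unfold P0. rewrite <- (opp_RInt_swap (V:=R_CompleteNormedModule)) by apply ex_RInt_phi.
      change (- P0 (- INR n) = P0 (INR n)). rewrite P0_odd. ring. }
    rewrite E. fold (P0 x).
    replace (P0 (INR n) + P0 x - (P0 x + / 2)) with (P0 (INR n) - / 2) by ring.
    apply HX. apply le_INR in Hn. rewrite Hn0, <- INR_IZR_INZ in Ha.
    pose proof (Rmax_l X 0). lra. }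
  unfold Phi. apply (UL_sequence (fun n => Rint phi_std (- INR n) x)); auto.
  apply epsilon_spec. eauto.
Qed.

Lemma Phi_fun : Phi = fun x => P0 x + / 2.
Proof. apply functional_extensionality. apply Phi_eq. Qed.

Lemma P0_deriv x : is_derive P0 x (phi_std x).
Proof.
  apply (is_derive_RInt phi_std P0 0 x).
  - apply filter_forall. intros b. apply (RInt_correct (V:=R_CompleteNormedModule)). apply ex_RInt_phi.
  - apply phi_cont.
Qed.

Lemma Phi_deriv x : derivable_pt_lim Phi x (phi_std x).
Proof.
  rewrite Phi_fun. apply is_derive_Reals.
  replace (phi_std x) with (phi_std x + 0) by ring.
  apply (is_derive_plus (K:=R_AbsRing) (V:=R_NormedModule)). apply P0_deriv.
  apply (is_derive_const (K:=R_AbsRing) (V:=R_NormedModule)).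
Qed.

Lemma Phi_derivable x : derivable_pt Phi x.
Proof. exists (phi_std x). apply Phi_deriv. Qed.

Lemma Phi_cont x : continuity_pt Phi x.
Proof. apply derivable_continuous_pt. apply Phi_derivable. Qed.

Lemma Phi_incr x y : x < y -> Phi x < Phi y.
Proof.
  intros H. destruct (MVT_cor2 Phi phi_std x y H (fun c _ => Phi_deriv c)) as [c [Hc _]].
  pose proof (phi_pos c). nra.
Qed.

Lemma Phi_le x y : x <= y -> Phi x <= Phi y.
Proof. intros [H|H]. left; apply Phi_incr; auto. subst; lra. Qed.

Lemma Phi_top eps : 0 < eps -> exists X, forall x, X <= x -> 1 - eps < Phi x.
Proof.
  intros He. destruct (P0_lim eps He) as [X HX]. exists X. intros x Hx.
  specialize (HX x Hx). rewrite Phi_eq. apply Rabs_def2 in HX. lra.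
Qed.

Lemma Phi_sym x : Phi (- x) = 1 - Phi x.
Proof. rewrite !Phi_eq, P0_odd. field. Qed.

Lemma Phi_bot eps : 0 < eps -> exists X, forall x, x <= X -> Phi x < eps.
Proof.
  intros He. destruct (Phi_top eps He) as [X HX]. exists (- X). intros x Hx.
  specialize (HX (- x) ltac:(lra)). rewrite Phi_sym in HX. lra.
Qed.

Lemma Phi_le1 x : Phi x <= 1.
Proof.
  destruct (Rle_or_lt (Phi x) 1) as [H|H]; auto.
  destruct (P0_lim (Phi x - 1)) as [X HX]. lra.
  specialize (HX (Rmax X x) (Rmax_l _ _)). apply Rabs_def2 in HX.
  pose proof (Phi_le x (Rmax X x) (Rmax_r _ _)). rewrite (Phi_eq (Rmax X x)) in H0. lra.
Qed.

Lemma Phi_lt1 x : Phi x < 1.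
Proof. pose proof (Phi_incr x (x+1) ltac:(lra)). pose proof (Phi_le1 (x+1)). lra. Qed.

Lemma Phi_gt0 x : 0 < Phi x.
Proof. pose proof (Phi_lt1 (- x)). rewrite Phi_sym in H. lra. Qed.

Lemma Phi_surj y : 0 < y < 1 -> exists x, Phi x = y.
Proof.
  intros Hy.
  destruct (Phi_bot y ltac:(lra)) as [A HA]. destruct (Phi_top (1 - y) ltac:(lra)) as [B HB].
  set (a := Rmin A B - 1). set (b := Rmax A B + 1).
  assert (Ha : Phi a < y) by (apply HA; unfold a; pose proof (Rmin_l A B); lra).
  assert (Hb : y < Phi b) by (specialize (HB b ltac:(unfold b; pose proof (Rmax_r A B); lra)); lra).
  assert (Hab : a < b) by (unfold a, b; pose proof (Rmin_l A B); pose proof (Rmax_l A B); lra).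
  destruct (f_interv_is_interv Phi a b y Hab ltac:(lra) (fun x _ => Phi_cont x)) as [x [_ Hx]].
  eauto.
Qed.

Lemma Phi_inv_spec y : 0 < y < 1 -> Phi (Phi_inv y) = y.
Proof. intros Hy. unfold Phi_inv. apply epsilon_spec. apply Phi_surj; auto. Qed.

Lemma Phi_inj x y : Phi x = Phi y -> x = y.
Proof.
  intros H. destruct (Rtotal_order x y) as [h|[h|h]]; auto.
  apply Phi_incr in h; lra. apply Phi_incr in h; lra.
Qed.

Lemma Phi_inv_Phi x : Phi_inv (Phi x) = x.
Proof. apply Phi_inj. apply Phi_inv_spec. split; [apply Phi_gt0|apply Phi_lt1]. Qed.

Lemma Phi_inv_incr y1 y2 : 0 < y1 -> y1 < y2 -> y2 < 1 -> Phi_inv y1 < Phi_inv y2.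
Proof.
  intros. destruct (Rlt_or_le (Phi_inv y1) (Phi_inv y2)) as [h|h]; auto.
  apply Phi_le in h. rewrite !Phi_inv_spec in h by lra. lra.
Qed.

Lemma Phi_inv_le y1 y2 : 0 < y1 -> y1 <= y2 -> y2 < 1 -> Phi_inv y1 <= Phi_inv y2.
Proof. intros. destruct H0. left; apply Phi_inv_incr; auto. subst; lra. Qed.

Lemma Phi_inv_deriv x : 0 < x < 1 -> derivable_pt_lim Phi_inv x (/ phi_std (Phi_inv x)).
Proof.
  intros Hx.
  set (lb := x / 2). set (ub := (1 + x) / 2).
  assert (Hlb : 0 < lb < x) by (unfold lb; lra). assert (Hub : x < ub < 1) by (unfold ub; lra).
  assert (Hcomp : forall z, lb <= z <= ub -> comp Phi Phi_inv z = id z).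
  { intros z Hz. unfold comp, id. apply Phi_inv_spec. lra. }
  assert (Hcont : continuity_pt Phi_inv x).
  { apply (continuity_pt_recip_interv Phi Phi_inv (Phi_inv lb) (Phi_inv ub)).
    - apply Phi_inv_incr; lra.
    - intros a b _ Hab _. apply Phi_incr; auto.
    - rewrite !Phi_inv_spec by lra. intros z H1 H2. unfold comp, id. apply Phi_inv_spec. lra.
    - rewrite !Phi_inv_spec by lra. intros z H1 H2. split; apply Phi_inv_le; lra.
    - intros; apply Phi_cont.
    - rewrite !Phi_inv_spec by lra. lra. }
  assert (Hincr : Phi_inv lb <= Phi_inv x <= Phi_inv ub) by (split; apply Phi_inv_le; lra).
  pose proof (derivable_pt_lim_recip_interv Phi Phi_inv lb ub x (fun a _ => Phi_derivable a) Hcont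
     ltac:(lra) ltac:(lra) Hincr Hcomp) as D.
  rewrite (derive_pt_eq_0 Phi (Phi_inv x) (phi_std (Phi_inv x)) _ (Phi_deriv _)) in D.
  replace (/ phi_std (Phi_inv x)) with (1 / phi_std (Phi_inv x)) by (unfold Rdiv; ring).
  apply D. pose proof (phi_pos (Phi_inv x)). lra.
Qed.

Lemma Q_deriv M x : 0 < x < 1 ->
  derivable_pt_lim (Qfun M) x (phi_std (M + Phi_inv x) * / phi_std (Phi_inv x)).
Proof.
  intros Hx.
  assert (D1 : derivable_pt_lim (fun z => M + Phi_inv z) x (0 + / phi_std (Phi_inv x))).
  { apply (derivable_pt_lim_plus (fun _ => M) Phi_inv). apply derivable_pt_lim_const.
    apply Phi_inv_deriv; auto. }
  rewrite Rplus_0_l in D1.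
  pose proof (derivable_pt_lim_comp (fun z => M + Phi_inv z) Phi x _ _ D1 (Phi_deriv _)) as D.
  exact D.
Qed.

Lemma qBS_formula M x : 0 < x < 1 -> qBS M x = exp (- M * Phi_inv x - M * M / 2).
Proof.
  intros Hx. unfold qBS.
  assert (E : exists l, derivable_pt_lim (Qfun M) x l) by (eexists; apply Q_deriv; auto).
  pose proof (epsilon_spec (inhabits 0) (fun l => derivable_pt_lim (Qfun M) x l) E) as Hl.
  rewrite (uniqueness_limite _ _ _ _ Hl (Q_deriv M x Hx)).
  unfold phi_std. set (y := Phi_inv x).
  assert (0 < sqrt (2 * PI)) by (apply sqrt_lt_R0; pose proof PI_RGT_0; lra).
  replace (- M * y - M * M / 2) with (- (M + y) ^ 2 / 2 + - (- y ^ 2 / 2)) by field.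
  rewrite exp_plus, exp_Ropp. field. pose proof (exp_pos (- y ^ 2 / 2)). split; lra.
Qed.

Lemma qBS_pos M x : 0 < x < 1 -> 0 < qBS M x.
Proof. intros. rewrite qBS_formula; auto. apply exp_pos. Qed.

Lemma qBS_mono M x1 x2 : 0 <= M -> 0 < x1 -> x1 <= x2 -> x2 < 1 -> qBS M x2 <= qBS M x1.
Proof.
  intros HM H1 H12 H2. rewrite !qBS_formula by lra.
  assert (Phi_inv x1 <= Phi_inv x2) by (apply Phi_inv_le; lra).
  destruct (Rle_lt_or_eq_dec _ _ (Rmult_le_compat_l M _ _ HM H)) as [h|h].
  - left. apply exp_increasing. lra.
  - right. f_equal. lra.
Qed.
Open Scope R_scope.

Fixpoint cnt (m d : R) (n : nat) (z : R) : R :=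
  match n with
  | O => 0
  | S k => cnt m d k z + (if Rle_dec (m + INR (S k) * d) z then 1 else 0)
  end.

Lemma cnt_full m d n z : 0 < d -> m + INR n * d <= z -> cnt m d n z = INR n.
Proof.
  intros Hd. induction n as [|k IH]; intros H; cbn [cnt]. reflexivity.
  rewrite IH. destruct (Rle_dec _ _); [|contradiction]. rewrite S_INR; ring.
  rewrite S_INR in H. lra.
Qed.

Lemma cnt_bound m d n z : 0 < d -> m <= z <= m + INR n * d ->
  m + d * cnt m d n z <= z <= m + d * cnt m d n z + d.
Proof.
  intros Hd. induction n as [|k IH]; intros H; cbn [cnt].
  - simpl in H. lra.
  - destruct (Rle_dec (m + INR k * d) z) as [h|h].
    + destruct (Rle_lt_or_eq_dec _ _ h) as [h1|h1].
      * rewrite (cnt_full m d k z Hd h). rewrite S_INR in *.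
        destruct (Rle_dec _ _) as [h2|h2]; lra.
      * rewrite (cnt_full m d k z Hd h). rewrite S_INR in *.
        destruct (Rle_dec _ _) as [h2|h2]; lra.
    + assert (z <= m + INR k * d) by lra. specialize (IH ltac:(lra)).
      destruct (Rle_dec _ _) as [h2|h2]; rewrite S_INR in *; lra.
Qed.

Lemma IsStepFun_ext (f g : R -> R) a b : (forall x, f x = g x) -> IsStepFun f a b -> IsStepFun g a b.
Proof. intros H. replace g with f. auto. apply functional_extensionality; auto. Qed.

Lemma glb_ex (S : R -> Prop) (b : R) : (exists x, S x) -> (forall x, S x -> b <= x) ->
  exists m, (forall x, S x -> m <= x) /\ (forall c, (forall x, S x -> c <= x) -> c <= m).
Proof.
  intros [x0 Hx0] Hb.
  destruct (completeness (fun y => S (- y))) as [l [Hl1 Hl2]].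
  - exists (- b). intros y Hy. specialize (Hb _ Hy). lra.
  - exists (- x0). rewrite Ropp_involutive. auto.
  - exists (- l). split.
    + intros x Hx. assert (- x <= l) by (apply Hl1; rewrite Ropp_involutive; auto). lra.
    + intros c Hc. assert (l <= - c).
      { apply Hl2. intros y Hy. specialize (Hc _ Hy). lra. }
      lra.
Qed.

Definition ind (f : R -> R) (y x : R) : R := if Rle_dec y (f x) then 1 else 0.

Lemma ind_cut (f : R -> R) y :
  (forall x z, 0 < x -> x <= z -> z < 1 -> f x <= f z) ->
  exists t, 0 <= t <= 1 /\ (forall z, 0 < z < t -> ind f y z = 0) /\ (forall z, t < z < 1 -> ind f y z = 1).
Proof.
  intros Hm.
  destruct (classic (exists x, 0 < x < 1 /\ y <= f x)) as [Hex|Hno].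
  - destruct (glb_ex (fun x => 0 < x < 1 /\ y <= f x) 0 Hex) as [t [Ht1 Ht2]].
    { intros x Hx; lra. }
    destruct Hex as [x1 Hx1].
    assert (Tb : 0 <= t <= x1) by (split; [apply Ht2; intros; lra| apply Ht1; auto]).
    exists t. split; [split|split].
    + lra.
    + lra.
    + intros z Hz. unfold ind. destruct (Rle_dec y (f z)); auto.
      assert (t <= z). apply Ht1. split; [lra|auto]. lra.
    + intros z Hz. unfold ind. destruct (Rle_dec y (f z)) as [h|h]; auto.
      exfalso. assert (z <= t); [|lra].
      apply Ht2. intros w [Hw1 Hw2]. destruct (Rle_or_lt z w) as [h'|h']; auto.
      exfalso. apply h. apply Rle_trans with (f w); auto. apply Hm; lra.
  - exists 1. split; [lra|split].
    + intros z Hz. unfold ind. destruct (Rle_dec y (f z)); auto. exfalso; apply Hno; exists z; split; [lra|auto].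
    + intros z Hz; lra.
Qed.

Lemma ind_step (f : R -> R) y :
  (forall x z, 0 < x -> x <= z -> z < 1 -> f x <= f z) -> IsStepFun (ind f y) 0 1.
Proof.
  intros Hm.
  destruct (constructive_indefinite_description _ (ind_cut f y Hm)) as [t [Ht [H0 H1]]].
  exists (cons 0 (cons t (cons 1 nil))). exists (cons 0 (cons 1 nil)).
  unfold adapted_couple. repeat split.
  - unfold ordered_Rlist. intros i Hi. simpl in Hi.
    destruct i as [|[|i]]; simpl; try lra; lia.
  - simpl. unfold Rmin. destruct (Rle_dec 0 1); lra.
  - simpl. unfold Rmax. destruct (Rle_dec 0 1); lra.
  - intros i Hi. simpl in Hi. unfold constant_D_eq, open_interval.
    destruct i as [|[|i]]; simpl; intros x Hx.
    + apply H0; lra.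
    + apply H1; lra.
    + lia.
Qed.

Lemma cnt_step (f : R -> R) m d n :
  (forall x z, 0 < x -> x <= z -> z < 1 -> f x <= f z) ->
  IsStepFun (fun x => cnt m d n (f x)) 0 1.
Proof.
  intros Hm. induction n as [|k IH].
  - exact (StepFun_P4 0 1 0).
  - apply (IsStepFun_ext (fun x => cnt m d k (f x) + 1 * ind f (m + INR (S k) * d) x) _ 0 1).
    + intros x. cbn [cnt]. unfold ind. ring.
    + exact (StepFun_P28 1 (mkStepFun IH) (mkStepFun (ind_step f (m + INR (S k) * d) Hm))).
Qed.

Lemma mono_integrable (f : R -> R) m Mx : m < Mx ->
  (forall x, 0 <= x <= 1 -> m <= f x <= Mx) ->
  (forall x z, 0 < x -> x <= z -> z < 1 -> f x <= f z) ->
  Riemann_integrable f 0 1.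
Proof.
  intros Hlt Hb Hm eps.
  assert (Ex : exists n : nat, (0 < n)%nat /\ (Mx - m) / INR n < eps).
  { destruct (archimed_cor1 (eps / (Mx - m))) as [N [HN1 HN2]].
    apply Rdiv_lt_0_compat; [apply cond_pos|lra].
    exists N. split; auto. apply lt_0_INR in HN2.
    unfold Rdiv. apply Rmult_lt_reg_r with (/ (Mx - m)). apply Rinv_0_lt_compat; lra.
    replace ((Mx - m) * / INR N * / (Mx - m)) with (/ INR N) by (field; lra). auto. }
  destruct (constructive_indefinite_description _ Ex) as [n [Hn Hd]].
  set (d := (Mx - m) / INR n) in *.
  assert (Hn' : 0 < INR n) by (apply lt_0_INR; auto).
  assert (Hdp : 0 < d) by (unfold d; apply Rdiv_lt_0_compat; lra).
  assert (HnD : INR n * d = Mx - m) by (unfold d; field; lra).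
  exists (mkStepFun (StepFun_P28 d (mkStepFun (StepFun_P4 0 1 m)) (mkStepFun (cnt_step f m d n Hm)))).
  exists (mkStepFun (StepFun_P4 0 1 d)).
  split.
  - intros t Ht. simpl. unfold fct_cte.
    assert (Ht' : 0 <= t <= 1) by (unfold Rmin, Rmax in Ht; destruct (Rle_dec 0 1); lra).
    specialize (Hb t Ht').
    pose proof (cnt_bound m d n (f t) Hdp ltac:(lra)).
    apply Rabs_le. lra.
  - rewrite StepFun_P18. rewrite Rabs_right; lra.
Qed.

Lemma dagger_glb (g : R -> ER) p : (exists m, is_glb (dagger_set g p) m) -> is_glb (dagger_set g p) (dagger g p).
Proof. intros H. unfold dagger. apply epsilon_spec. auto. Qed.

Lemma superdiff_mono (g : R -> ER) x1 x2 p1 p2 :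
  superdiff g x1 p1 -> superdiff g x2 p2 -> p1 < p2 -> x2 <= x1.
Proof.
  intros [a1 [E1 H1]] [a2 [E2 H2]] Hp.
  specialize (H1 x2). specialize (H2 x1). rewrite E2 in H1. rewrite E1 in H2. simpl in H1, H2.
  destruct (Rle_or_lt x2 x1) as [h|h]; auto. exfalso. nra.
Qed.

Lemma glb_nonempty (S : R -> Prop) m : is_glb S m -> exists x, S x.
Proof.
  intros [H1 H2]. apply NNPP. intros Hn. assert (m + 1 <= m); [|lra].
  apply H2. intros x Hx. exfalso. apply Hn. eauto.
Qed.

Lemma glb_ex' (S : R -> Prop) b : (exists x, S x) -> (forall x, S x -> b <= x) -> exists m, is_glb S m.
Proof.
  intros H1 H2. destruct (glb_ex S b H1 H2) as [m [Hm1 Hm2]]. exists m. split; auto.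
Qed.

Lemma grid_le (xs : nat -> R) N : (forall i, (S i < N)%nat -> xs i < xs (S i)) ->
  forall i, (i < N)%nat -> xs 0%nat <= xs i.
Proof.
  intros Hg i. induction i as [|i IH]; intros Hi. lra.
  specialize (IH ltac:(lia)). specialize (Hg i Hi). lra.
Qed.

Lemma argmax_grid (h : nat -> R) n : (1 <= n)%nat ->
  exists j, (j < n)%nat /\ forall i, (i < n)%nat -> h i <= h j.
Proof.
  induction n as [|n IH]; intros Hn. lia.
  destruct (Nat.eq_dec n 0) as [->|Hn0].
  - exists 0%nat. split. lia. intros i Hi. replace i with 0%nat by lia. lra.
  - destruct (IH ltac:(lia)) as [j [Hj1 Hj2]].
    destruct (Rle_or_lt (h n) (h j)) as [c|c].
    + exists j. split. lia. intros i Hi. destruct (Nat.eq_dec i n) as [->|ne]; auto. apply Hj2; lia.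
    + exists n. split. lia. intros i Hi. destruct (Nat.eq_dec i n) as [->|ne]; [lra|].
      specialize (Hj2 i ltac:(lia)). lra.
Qed.

Lemma segment (xs : nat -> R) y : forall k, xs 0%nat <= y -> y <= xs k ->
  y = xs 0%nat \/ exists i, (S i <= k)%nat /\ xs i <= y <= xs (S i).
Proof.
  induction k as [|k IH]; intros H1 H2. left; lra.
  destruct (Rle_or_lt y (xs k)) as [c|c].
  - destruct (IH H1 c) as [h|[i [Hi Hy]]]; auto. right. exists i. split. lia. auto.
  - right. exists k. split. lia. lra.
Qed.

Lemma v_superdiff_ex (v : R -> ER) (N : nat) (xs : nat -> R)
  (HN : (1 <= N)%nat)
  (Hgrid : forall i, (S i < N)%nat -> xs i < xs (S i))
  (Hv_low : forall x, x < xs 0%nat -> v x = None)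
  (Hv_fin : forall x, xs 0%nat <= x -> exists a, v x = Some a)
  (Hv_top : forall x, xs (N - 1)%nat <= x -> v x = v (xs (N - 1)%nat))
  (Hv_lin : forall i, (S i < N)%nat -> exists a b,
       forall x, xs i <= x <= xs (S i) -> v x = Some (a * x + b))
  p : 0 <= p -> exists x, superdiff v x p.
Proof.
  intros Hp.
  assert (Fin : forall x, xs 0%nat <= x -> v x = Some (valR (v x))).
  { intros x Hx. destruct (Hv_fin x Hx) as [a Ha]. rewrite Ha. reflexivity. }
  set (h := fun i => valR (v (xs i)) - p * xs i).
  destruct (argmax_grid h N HN) as [j [Hj Hmax]].
  assert (Gl := grid_le xs N Hgrid).
  exists (xs j). exists (valR (v (xs j))). split. apply Fin, Gl; auto.
  intros y.
  destruct (Rlt_or_le y (xs 0%nat)) as [c1|c1].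
  { rewrite Hv_low; auto. simpl; auto. }
  destruct (Rle_or_lt (xs (N - 1)%nat) y) as [c2|c2].
  { rewrite Hv_top, Fin by (auto; apply Gl; lia). simpl.
    specialize (Hmax (N-1)%nat ltac:(lia)). unfold h in Hmax. nra. }
  destruct (segment xs y (N-1)%nat c1 (Rlt_le _ _ c2)) as [E|[i [Hi Hy]]].
  { subst y. rewrite Fin by lra. simpl. specialize (Hmax 0%nat ltac:(lia)). unfold h in Hmax. lra. }
  destruct (Hv_lin i ltac:(lia)) as [a [b Hab]].
  rewrite (Hab y Hy). simpl.
  pose proof (Hmax i ltac:(lia)) as M1. pose proof (Hmax (S i) ltac:(lia)) as M2.
  unfold h in M1, M2. rewrite (Hab (xs i)) in M1 by (pose proof (Hgrid i ltac:(lia)); lra).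
  rewrite (Hab (xs (S i))) in M2 by (pose proof (Hgrid i ltac:(lia)); lra). simpl in M1, M2.
  destruct (Rle_or_lt 0 (a - p)) as [c|c].
  - assert (0 <= (a - p) * (xs (S i) - y)) by (apply Rmult_le_pos; lra). nra.
  - assert (0 <= (p - a) * (y - xs i)) by (apply Rmult_le_pos; lra). nra.
Qed.

Theorem mainTheorem10
  (mu r sigma dt s : R) (C : nat) (u v : R -> ER) (N : nat) (xs : nat -> R)
  (Hsigma : 0 < sigma) (Hdt : 0 < dt) (Hs : 0 < s < 1) (HC : C = 0%nat \/ C = 1%nat)
  (* v: piecewise linear on the grid xs 0 < ... < xs (N-1), -oo below, constant above *)
  (HN : (1 <= N)%nat)
  (Hgrid : forall i, (S i < N)%nat -> xs i < xs (S i))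
  (Hv_low : forall x, x < xs 0%nat -> v x = None)
  (Hv_fin : forall x, xs 0%nat <= x -> exists a, v x = Some a)
  (Hv_top : forall x, xs (N - 1)%nat <= x -> v x = v (xs (N - 1)%nat))
  (Hv_lin : forall i, (S i < N)%nat -> exists a b,
       forall x, xs i <= x <= xs (S i) -> v x = Some (a * x + b))
  (Hv_conc : concave_ext v) (Hv_incr : nondecreasing_ext v)
  (Hv_nonpos : forall x a, v x = Some a -> a <= 0)
  (* u: concave increasing, u^dagger real and continuous on (0,oo), -> oo at 0 *)
  (Hu_conc : concave_ext u) (Hu_incr : nondecreasing_ext u)
  (Hu_dag : forall p, 0 < p -> exists m, is_glb (dagger_set u p) m)
  (Hu_cont : forall p, 0 < p -> continuity_pt (dagger u) p)
  (Hu_lim0 : forall K, exists d, 0 < d /\ forall p, 0 < p < d -> K < dagger u p) :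
  (* lim_{eta -> oo} gamma^eta = gamma_min = inf { x : u x > -oo } *)
  (forall gmin, is_glb (dom_ext u) gmin ->
     forall eps, 0 < eps -> exists H, forall eta, H < eta ->
       Rabs (gamma_eta u v mu r sigma dt s C eta - gmin) < eps) /\
  ((~ exists gmin, is_glb (dom_ext u) gmin) ->
     forall K, exists H, forall eta, H < eta ->
       gamma_eta u v mu r sigma dt s C eta < K).
Proof.
  assert (SDv := v_superdiff_ex v N xs HN Hgrid Hv_low Hv_fin Hv_top Hv_lin).
  assert (Low : forall x p, superdiff v x p -> xs 0%nat <= x).
  { intros x p [gx [E _]]. destruct (Rlt_or_le x (xs 0%nat)) as [c|c]; auto.
    rewrite Hv_low in E by auto. discriminate. }
  assert (Gv : forall p, 0 <= p -> is_glb (dagger_set v p) (dagger v p)).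
  { intros p Hp. apply dagger_glb. apply (glb_ex' _ (xs 0%nat)).
    apply SDv; auto. intros x Hx. apply (Low x p Hx). }
  assert (Dv0 : forall p, 0 <= p -> xs 0%nat <= dagger v p).
  { intros p Hp. destruct (Gv p Hp) as [_ H2]. apply H2. intros x Hx. apply (Low x p Hx). }
  assert (Dmono : forall p1 p2, 0 <= p1 -> p1 <= p2 -> dagger v p2 <= dagger v p1).
  { intros p1 p2 H1 H12. destruct H12 as [H12|H12]; [|subst; lra].
    destruct (Gv p1 H1) as [_ G1]. destruct (Gv p2 ltac:(lra)) as [G2 _].
    apply G1. intros x1 Hx1. destruct (SDv p2 ltac:(lra)) as [x2 Hx2].
    apply Rle_trans with x2. apply G2; auto. apply (superdiff_mono v x1 x2 p1 p2); auto. }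
  destruct (Hv_fin (xs 0%nat) (Rle_refl _)) as [a0 Ha0].
  assert (Ha0n : a0 <= 0) by (apply (Hv_nonpos _ _ Ha0)).
  assert (Vb : forall y, a0 <= valR (v y) <= 0).
  { intros y. destruct (v y) as [a|] eqn:E; simpl; [|lra].
    split; [|apply (Hv_nonpos y); auto].
    destruct (Rlt_or_le y (xs 0%nat)) as [c|c]. rewrite Hv_low in E by auto; discriminate.
    pose proof (Hv_incr _ _ c) as Hi. rewrite Ha0, E in Hi. simpl in Hi. auto. }
  assert (VM : forall y1 y2, xs 0%nat <= y1 -> y1 <= y2 -> valR (v y1) <= valR (v y2)).
  { intros y1 y2 H1 H2. destruct (Hv_fin y1 H1) as [a1 E1]. destruct (Hv_fin y2 ltac:(lra)) as [a2 E2].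
    pose proof (Hv_incr _ _ H2) as Hi. rewrite E1, E2 in Hi. rewrite E1, E2. simpl in *. auto. }
  assert (HM : 0 <= Mpar mu r sigma dt).
  { unfold Mpar. apply Rmult_le_pos. apply Rmult_le_pos. apply Rabs_pos. apply sqrt_pos.
    left; apply Rinv_0_lt_compat; auto. }
  assert (Iint : forall eta, 0 < eta ->
     1 + a0 <= Rint (fun x => 1 + valR (v (f_eta v mu r sigma dt s C eta x))) 0 1 <= 1).
  { intros eta He.
    set (K := eta * powerRZ s (Z.of_nat C - 1) * exp (- r * dt)).
    assert (HK : 0 < K).
    { unfold K. apply Rmult_lt_0_compat. apply Rmult_lt_0_compat; auto. apply powerRZ_lt; lra. apply exp_pos. }
    set (g := fun x => 1 + valR (v (f_eta v mu r sigma dt s C eta x))).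
    assert (Hb : forall x, 1 + a0 <= g x <= 1) by (intros x; unfold g; pose proof (Vb (f_eta v mu r sigma dt s C eta x)); lra).
    assert (pr : Riemann_integrable g 0 1).
    { apply (mono_integrable g (1 + a0) 2). lra. intros x _; specialize (Hb x); lra.
      intros x z Hx Hxz Hz. unfold g, f_eta. fold K.
      assert (Q1 := qBS_pos (Mpar mu r sigma dt) x ltac:(lra)).
      assert (Q2 := qBS_pos (Mpar mu r sigma dt) z ltac:(lra)).
      assert (Q3 := qBS_mono (Mpar mu r sigma dt) x z HM Hx Hxz Hz).
      apply Rplus_le_compat_l. apply VM. apply Dv0. nra.
      apply Dmono. nra. apply Rmult_le_compat_l; lra. }
    assert (ex : ex_RInt g 0 1) by (apply ex_RInt_Reals_1; exact pr).
    fold g. rewrite Rint_eq by auto. split.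
    - replace (1 + a0) with (RInt (fun _ => 1 + a0) 0 1 : R) by (rewrite RInt_constR; ring).
      apply RInt_leR; auto. lra. apply ex_RInt_contR; intros; apply continuous_const.
      intros; apply Hb.
    - replace 1 with (RInt (fun _ => 1) 0 1 : R) at 2 by (rewrite RInt_constR; ring).
      apply RInt_leR; auto. lra. apply ex_RInt_contR; intros; apply continuous_const.
      intros; apply Hb. }
  set (pe := fun eta => - (eta / dt) *
    / (-1 + s * Rint (fun x => 1 + valR (v (f_eta v mu r sigma dt s C eta x))) 0 1)).
  assert (Gam : forall eta, gamma_eta u v mu r sigma dt s C eta = dagger u (pe eta)) by reflexivity.
  assert (Pgrow : forall P, exists H, forall eta, H < eta -> P < pe eta).
  { intros P. set (B := 1 - s * (1 + a0)).
    assert (HB : 1 - s <= B) by (unfold B; nra).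
    exists (Rmax 0 (Rabs P * dt * B)). intros eta Heta.
    assert (He : 0 < eta) by (pose proof (Rmax_l 0 (Rabs P * dt * B)); lra).
    assert (He2 : Rabs P * dt * B < eta) by (pose proof (Rmax_r 0 (Rabs P * dt * B)); lra).
    destruct (Iint eta He) as [I1 I2]. unfold pe.
    set (I := Rint (fun x => 1 + valR (v (f_eta v mu r sigma dt s C eta x))) 0 1) in *.
    assert (D1 : 1 - s <= 1 - s * I) by nra.
    assert (D2 : 1 - s * I <= B) by (unfold B; nra).
    replace (- (eta / dt) * / (-1 + s * I)) with ((eta / dt) / (1 - s * I)) by (field; lra).
    assert (Hq : eta / (dt * B) <= (eta / dt) / (1 - s * I)).
    { replace (eta/dt/(1-s*I)) with (eta / (dt * (1 - s*I))) by (field; lra).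
      apply Rmult_le_compat_l; [lra|]. apply Rinv_le_contravar. nra. apply Rmult_le_compat_l; lra. }
    assert (Hr : Rabs P < eta / (dt * B)).
    { apply Rmult_lt_reg_r with (dt * B). nra. unfold Rdiv. rewrite Rmult_assoc, Rinv_l, Rmult_1_r by nra. lra. }
    pose proof (Rle_abs P). lra. }
  assert (Gu : forall p, 0 < p -> is_glb (dagger_set u p) (dagger u p)).
  { intros p Hp. apply dagger_glb. apply Hu_dag; auto. }
  assert (Sdom : forall x p, superdiff u x p -> dom_ext u x).
  { intros x p [gx [E _]]. unfold dom_ext. rewrite E. discriminate. }
  destruct (glb_nonempty _ _ (Gu 1 ltac:(lra))) as [X HX].
  assert (Key : forall z, dom_ext u z -> forall e, 0 < e -> exists P, 0 < P /\
      forall p, P < p -> dagger u p < z + e).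
  { intros z Hz e He. destruct (u z) as [uz|] eqn:Ez; [|exfalso; apply Hz; auto].
    pose proof HX as [aX [EX _]].
    exists (Rmax 1 (Rabs (aX - uz) / e)). split. pose proof (Rmax_l 1 (Rabs (aX - uz) / e)); lra.
    intros p Hp. pose proof (Rmax_l 1 (Rabs (aX - uz) / e)). pose proof (Rmax_r 1 (Rabs (aX - uz) / e)).
    destruct (glb_nonempty _ _ (Gu p ltac:(lra))) as [x Hx].
    assert (Hxl : x <= X) by (apply (superdiff_mono u X x 1 p); auto; lra).
    destruct (Gu p ltac:(lra)) as [G1 _]. specialize (G1 x Hx).
    destruct Hx as [ax [Ex Hsx]].
    pose proof (Hu_incr _ _ Hxl) as Hi. rewrite Ex, EX in Hi. simpl in Hi.
    specialize (Hsx z). rewrite Ez in Hsx. simpl in Hsx.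
    assert (Hpe : Rabs (aX - uz) < p * e).
    { apply Rmult_lt_reg_r with (/ e). apply Rinv_0_lt_compat; auto.
      rewrite Rmult_assoc, Rinv_r, Rmult_1_r by lra. unfold Rdiv in *. lra. }
    pose proof (Rle_abs (aX - uz)).
    assert (p * (x - z) < p * e) by nra.
    assert (x - z < e) by (apply Rmult_lt_reg_l with p; lra).
    lra. }
  split.
  - intros gmin Hg eps He.
    destruct (classic (exists z, dom_ext u z /\ z < gmin + eps / 2)) as [[z [Hz1 Hz2]]|Hno].
    2:{ exfalso. destruct Hg as [_ Hg2]. assert (gmin + eps / 2 <= gmin); [|lra].
        apply Hg2. intros x Hx. destruct (Rle_or_lt (gmin + eps/2) x); auto. exfalso; apply Hno; eauto. }
    destruct (Key z Hz1 (eps / 2) ltac:(lra)) as [P [HP HPk]].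
    destruct (Pgrow P) as [H HH]. exists H. intros eta Heta.
    rewrite Gam. specialize (HH eta Heta). specialize (HPk _ HH).
    assert (gmin <= dagger u (pe eta)).
    { destruct (Gu (pe eta) ltac:(lra)) as [_ G2]. apply G2. intros x Hx. destruct Hg as [Hg1 _].
      apply Hg1. eapply Sdom; eauto. }
    rewrite Rabs_right by lra. lra.
  - intros Hno K.
    destruct (classic (exists z, dom_ext u z /\ z < K - 1)) as [[z [Hz1 Hz2]]|Hn].
    2:{ exfalso. apply Hno. apply (glb_ex' _ (K - 1)).
        exists X. eapply Sdom; eauto.
        intros x Hx. destruct (Rle_or_lt (K - 1) x); auto. exfalso; apply Hn; eauto. }
    destruct (Key z Hz1 1 ltac:(lra)) as [P [HP HPk]].
    destruct (Pgrow P) as [H HH]. exists H. intros eta Heta.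
    rewrite Gam. specialize (HH eta Heta). specialize (HPk _ HH). lra.
Qed.
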